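(* Let $\psi:(0,+\infty)\to\mathbb R$ be a $C^1$ concave function with $\psi>0$ and $\psi'>0$, and assume $\psi(1)D_w$ lies in the image of $\psi$ (so that $\psi^{-1}(\psi(1)D_w)$ is defined; $\psi^{-1}$ is the inverse of the strictly increasing $\psi$). Suppose $f:V\to(0,\infty)$ and $(\Delta^\psi f)(x)<0$ at some vertex $x$. Then $$\Gamma^{\psi}(f)(x)\leq D_{\mu}\left[\psi'(1)\left(\psi^{-1}(\psi(1)D_{w})-1\right)+\psi(1)\right].$$
   Context: Graphs: $G=(V,E)$ is a connected, locally finite graph; each edge $xy$ carries a weight $w_{xy}>0$ (possibly asymmetric), and $\mu:V\to(0,\infty)$ is a vertex measure; $y\sim x$ means $xy\in E$, $\deg(x)=\sum_{y\sim x}w_{xy}<\infty$, $D_\mu=\sup_{x}\deg(x)/\mu(x)$, $D_w=\sup_{x\sim y}\deg(x)/w_{xy}$ (assumed finite). Laplacian: $\Delta f(x)=\frac{1}{\mu(x)}\sum_{y\sim x}w_{xy}(f(y)-f(x))$. For $\psi:(0,\infty)\to\mathbb R$ and $f:V\to(0,\infty)$: $\Delta^\psi f(x)=\Delta\big[\psi\big(\tfrac{f}{f(x)}\big)\big](x)$; for $C^1$ $\psi$, $\overline\psi(s)=\psi'(1)(s-1)-(\psi(s)-\psi(1))$ and $\Gamma^\psi f=\Delta^{\overline\psi}f$. *)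

(* Defs.v *)
From HB Require Import structures.
From mathcomp Require Import all_boot all_order all_algebra.
From mathcomp Require Import all_classical all_reals all_analysis.
From Stdlib Require Import Relations.
Set Implicit Arguments. Unset Strict Implicit. Unset Printing Implicit Defensive.
Import Order.TTheory GRing.Theory Num.Theory numFieldNormedType.Exports.
Local Open Scope classical_set_scope.
Local Open Scope ring_scope.

(* A locally finite graph on vertex type V is given by its neighbour lists
   N x (finite, duplicate free): y ~ x  iff  y \in N x.
   Edge weights w x y (possibly asymmetric), vertex measure mu. *)

Definition adjacent (V : eqType) (N : V -> seq V) (x y : V) : Prop := y \in N x.

Definition weighted_graph (R : realType) (V : eqType) (N : V -> seq V)
  (w : V -> V -> R) (mu : V -> R) : Prop :=
  [/\ (forall x, uniq (N x) /\ x \notin N x),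
      (forall x y, (y \in N x) = (x \in N y)),
      (forall x y, clos_refl_trans V (adjacent N) x y),
      (forall x y, y \in N x -> 0 < w x y)
    & (forall x, 0 < mu x)].

Definition deg (R : realType) (V : eqType) (N : V -> seq V)
  (w : V -> V -> R) (x : V) : R := \sum_(y <- N x) w x y.

Definition Dmu_set (R : realType) (V : eqType) (N : V -> seq V)
  (w : V -> V -> R) (mu : V -> R) : set R :=
  [set r | exists x, r = deg N w x / mu x].
Definition Dmu (R : realType) (V : eqType) (N : V -> seq V)
  (w : V -> V -> R) (mu : V -> R) : R := sup (Dmu_set N w mu).

Definition Dw_set (R : realType) (V : eqType) (N : V -> seq V)
  (w : V -> V -> R) : set R :=
  [set r | exists x y, y \in N x /\ r = deg N w x / w x y].
Definition Dw (R : realType) (V : eqType) (N : V -> seq V)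
  (w : V -> V -> R) : R := sup (Dw_set N w).

Definition lap (R : realType) (V : eqType) (N : V -> seq V)
  (w : V -> V -> R) (mu : V -> R) (f : V -> R) (x : V) : R :=
  (mu x)^-1 * \sum_(y <- N x) w x y * (f y - f x).

Definition lap_psi (R : realType) (V : eqType) (N : V -> seq V)
  (w : V -> V -> R) (mu : V -> R) (psi : R -> R) (f : V -> R) (x : V) : R :=
  lap N w mu (fun y => psi (f y / f x)) x.

Definition psibar (R : realType) (psi : R -> R) (s : R) : R :=
  (derive1 psi) 1 * (s - 1) - (psi s - psi 1).

Definition Gamma_psi (R : realType) (V : eqType) (N : V -> seq V)
  (w : V -> V -> R) (mu : V -> R) (psi : R -> R) (f : V -> R) (x : V) : R :=
  lap_psi N w mu (psibar psi) f x.

Definition good_psi (R : realType) (psi : R -> R) : Prop :=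
  [/\ (forall s, 0 < s -> derivable psi s 1),
      (forall s : R, 0 < s -> {for s, continuous (derive1 psi)}),
      (forall s t l, 0 < s -> 0 < t -> 0 <= l <= 1 ->
          l * psi s + (1 - l) * psi t <= psi (l * s + (1 - l) * t)),
      (forall s, 0 < s -> 0 < psi s)
    & (forall s, 0 < s -> 0 < (derive1 psi) s)].

(* Main.v *)
Require Import Defs.
From mathcomp Require Import all_boot all_order all_algebra.
From mathcomp Require Import all_classical all_reals all_analysis.
Import Order.TTheory GRing.Theory Num.Theory numFieldNormedType.Exports.
Local Open Scope classical_set_scope.
Local Open Scope ring_scope.

Lemma psi_strict (R : realType) (psi : R -> R) : good_psi psi ->
  forall s t, 0 < s -> s < t -> psi s < psi t.
Proof.
case=> d _ _ _ d' s t s0 st.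
have t0 : 0 < t by apply: lt_trans st.
apply: (@gtr0_derive1_lt_oo R psi 0 (t + 1)).
- by move=> u; rewrite in_itv /= => /andP [u0 _]; apply: d.
- by move=> u; rewrite in_itv /= => /andP [u0 _]; apply: d'.
- move=> u; rewrite inE /= in_itv /= => /andP [u0 _].
  apply: differentiable_continuous; apply/derivable1_diffP; exact: d.
- by rewrite in_itv /= s0 /= (lt_trans st) // ltrDl.
- by rewrite in_itv /= t0 /= ltrDl.
- exact: st.
Qed.

Lemma term_le (R : realType) (V : eqType) (s : seq V) (F : V -> R) y :
  (forall z, z \in s -> 0 <= F z) -> y \in s -> F y <= \sum_(z <- s) F z.
Proof.
move=> H ys; rewrite (big_rem y ys) /= lerDl.
rewrite big_seq; apply: sumr_ge0 => z zs; apply: H; exact: (mem_rem zs).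
Qed.

Theorem mainTheorem5 (R : realType) (V : eqType) (N : V -> seq V)
  (w : V -> V -> R) (mu : V -> R) (psi : R -> R) (f : V -> R) (x : V) (c : R) :
  weighted_graph N w mu ->
  has_ubound (Dmu_set N w mu) ->
  has_ubound (Dw_set N w) ->
  good_psi psi ->
  (* c = psi^{-1}(psi(1) D_w) *)
  0 < c -> psi c = psi 1 * Dw N w ->
  (forall y, 0 < f y) ->
  lap_psi N w mu psi f x < 0 ->
  Gamma_psi N w mu psi f x <=
    Dmu N w mu * ((derive1 psi) 1 * (c - 1) + psi 1).
Proof.
move=> [_ _ _ wpos mupos] hDmu hDw gp c0 hc fpos hlap.
have gp' := gp; case: gp' => _ _ _ psipos dpos.
have mono := @psi_strict _ _ gp.
set d := derive1 psi 1.
have d0 : 0 < d by apply: dpos.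
have p1 : 0 < psi 1 by apply: psipos.
have fx0 := fpos x.
have fxx : f x / f x = 1 by rewrite divff // gt_eqF.
have tpos : forall y, 0 < f y / f x by move=> y; rewrite divr_gt0.
move: hlap; rewrite /lap_psi /lap fxx.
set S := \sum_(y <- N x) _.
have mui : 0 < (mu x)^-1 by rewrite invr_gt0.
move=> hlap.
have S0 : S < 0 by rewrite -(pmulr_rlt0 _ mui).
have degE : deg N w x * psi 1 = \sum_(y <- N x) w x y * psi 1
  by rewrite /deg big_distrl.
have Sdef : S = \sum_(y <- N x) w x y * psi (f y / f x) - deg N w x * psi 1.
  rewrite degE /S -sumrB; apply: eq_bigr => y _; by rewrite mulrBr.
have Hlt : \sum_(y <- N x) w x y * psi (f y / f x) < deg N w x * psi 1.
  by rewrite -subr_lt0 -Sdef.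
have wge : forall y, y \in N x -> 0 < w x y by move=> y; apply: wpos.
have deg_ge : forall y, y \in N x -> w x y <= deg N w x.
  move=> y yN; apply: (@term_le _ _ _ (w x)) => // z zN; exact/ltW/wge.
have Dw_ge : forall y, y \in N x -> deg N w x / w x y <= Dw N w.
  move=> y yN; apply: sup_upper_bound; first by split => //; exists (deg N w x / w x y); exists x, y.
  by exists x, y.
have tc : forall y, y \in N x -> f y / f x < c.
  move=> y yN.
  have h1 : w x y * psi (f y / f x) < deg N w x * psi 1.
    apply: le_lt_trans Hlt; apply: (@term_le _ _ _ (fun z => w x z * psi (f z / f x))) => // z zN.
    by rewrite mulr_ge0 // ltW // ?wge ?psipos.
  have h2 : psi (f y / f x) < psi c.
    rewrite hc; apply: (lt_le_trans (y := psi 1 * (deg N w x / w x y))).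
      by rewrite mulrA ltr_pdivlMr ?wge // mulrC [psi 1 * _]mulrC.
    by rewrite ler_pM2l // Dw_ge.
  rewrite ltNge; apply/negP => cy.
  move: cy; rewrite le_eqVlt => /orP [/eqP E|cy].
    by move: h2; rewrite E ltxx.
  by move: (mono _ _ c0 cy); rewrite ltNge ltW.
have [y0 y0N] : exists y0, y0 \in N x.
  case E: (N x) => [|y0 s]; last by exists y0; rewrite inE eqxx.
  by move: S0; rewrite /S E big_nil ltxx.
have c1 : 1 <= c.
  rewrite leNgt; apply/negP => c1.
  have := mono _ _ c0 c1; rewrite hc ltNge => /negP; apply.
  rewrite ler_peMr ?(ltW p1) //; apply: (le_trans _ (Dw_ge _ y0N)).
  by rewrite ler_pdivlMr ?wge // mul1r deg_ge.
set B := d * (c - 1) + psi 1.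
have B0 : 0 <= B by rewrite addr_ge0 ?mulr_ge0 ?subr_ge0 // ltW.
rewrite /Gamma_psi /lap_psi /lap fxx.
have psib1 : psibar psi 1 = 0 by rewrite /psibar !subrr mulr0 subr0.
rewrite psib1.
have Hsum : \sum_(y <- N x) w x y * (psibar psi (f y / f x) - 0) <= deg N w x * B.
  rewrite /deg big_distrl /= big_seq [X in _ <= X]big_seq.
  apply: ler_sum => y yN; rewrite subr0 ler_pM2l ?wge // /psibar -/d /B.
  apply: lerD; first by rewrite ler_pM2l // lerB // ltW // tc.
  by rewrite opprB lerBlDr lerDl ltW // psipos.
apply: (le_trans (y := (mu x)^-1 * (deg N w x * B))).
  by rewrite ler_pM2l.
rewrite mulrA [_ * deg N w x]mulrC ler_wpM2r //.
apply: sup_upper_bound; first by split => //; exists (deg N w x / mu x); exists x.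
by exists x.
Qed.
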